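(* Let $\beta\in B_3$ be conjugate to $\sigma_2^{-a_k}\sigma_1\cdots\sigma_2^{-a_1}\sigma_1\Delta^{2d}$, where $k\ge1$, $d\in\mathbb{Z}$, all $a_i\geq0$ and at least one $a_i\neq0$. Then both eigenvalues of $\rho(\beta)$ lie in $\mathbb{E}$. Furthermore, the eigenvalues of $\rho(\beta)$ (1) are both positive in $(\mathbb{E},Q)$ if $k$ and $a_1+\cdots+a_k$ are both even; (2) are both negative if $k$ and $a_1-\cdots-a_k$ are both odd; and (3) have opposite signs if $k-a_1-\cdots-a_k$ is odd.
   Context: $B_3$ is the braid group generated by $\sigma_1,\sigma_2$, and $\Delta=(\sigma_1\sigma_2\sigma_1)^2$. The reduced Burau representation $\rho:B_3\to\mathrm{GL}_2(\mathbb{Z}[t^{\pm1}])$ is the homomorphism with $\rho(\sigma_1)=\begin{pmatrix}-t&0\\1&1\end{pmatrix}$, $\rho(\sigma_2)=\begin{pmatrix}1&t\\0&-t\end{pmatrix}$. $\mathbb{E}=\bigcup_{n\ge1}\mathbb{R}((t^{1/n}))$ is the field of Puiseux series over $\mathbb{R}$, containing $\mathbb{Z}[t^{\pm1}]$, with the ordering whose positive cone $Q$ consists of the nonzero series whose lowest-exponent nonzero coefficient is positive. *)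

(* Defs.v *)
From HB Require Import structures.
From mathcomp Require Import all_boot all_order all_algebra.
From mathcomp Require Import boolp classical_sets functions cardinality fsbigop.
From mathcomp Require Import Rstruct.
From Stdlib Require Rdefinitions.

Set Implicit Arguments.
Unset Strict Implicit.
Unset Printing Implicit Defensive.
Import Order.TTheory GRing.Theory Num.Theory.
Local Open Scope ring_scope.

(* A letter (g, e) stands for sigma_1 (g = false) or sigma_2 (g = true),       *)
(* to the power -1 if e = true and +1 if e = false.                            *)
Definition letter := (bool * bool)%type.
Definition word := seq letter.

Definition sig1 : letter := (false, false).
Definition sig2 : letter := (true, false).
Definition linv (x : letter) : letter := (x.1, ~~ x.2).
Definition winv (w : word) : word := rev (map linv w).

Inductive braid_eq : word -> word -> Prop :=
| beq_refl w : braid_eq w w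
| beq_sym u v : braid_eq u v -> braid_eq v u
| beq_trans u v w : braid_eq u v -> braid_eq v w -> braid_eq u w
| beq_cat u u' v v' : braid_eq u u' -> braid_eq v v' -> braid_eq (u ++ v) (u' ++ v')
| beq_cancel x : braid_eq [:: x; linv x] [::]
| beq_braid : braid_eq [:: sig1; sig2; sig1] [:: sig2; sig1; sig2].

Definition conjugate_B3 (u v : word) : Prop :=
  exists g : word, braid_eq u (g ++ v ++ winv g).

Definition wpow (w : word) (n : int) : word :=
  match n with
  | Posz m => flatten (nseq m w)
  | Negz m => flatten (nseq m.+1 (winv w))
  end.

Definition Delta : word := [:: sig1; sig2; sig1; sig1; sig2; sig1].

(* sigma_2^{-a_k} sigma_1 ... sigma_2^{-a_1} sigma_1 Delta^{2d},
   for a = [:: a_1; ...; a_k] *)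
Definition model_word (a : seq nat) (d : int) : word :=
  flatten [seq nseq ai (linv sig2) ++ [:: sig1] | ai <- rev a]
  ++ wpow Delta (2 * d).

(* Reduced Burau representation.  An element of GL_2(Z[t^{+-1}]) is encoded   *)
(* as a pair (M, s) with M a 2x2 matrix over Z[t] = {poly int} (t = 'X),      *)
(* standing for t^{-s} M.                                                     *)
Definition mx2 (a b c d : {poly int}) : 'M[{poly int}]_2 :=
  \matrix_(i < 2, j < 2)
    if i == ord0 then (if j == ord0 then a else b) else (if j == ord0 then c else d).

(* rho(s1) = [[-t,0],[1,1]], rho(s2) = [[1,t],[0,-t]],
   rho(s1^-1) = t^-1 [[-1,0],[1,t]], rho(s2^-1) = t^-1 [[t,t],[0,-1]] *)
Definition rho_letter (x : letter) : 'M[{poly int}]_2 * nat :=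
  match x with
  | (false, false) => (mx2 (- 'X) 0 1 1, 0%N)
  | (true, false) => (mx2 1 'X 0 (- 'X), 0%N)
  | (false, true) => (mx2 (-1) 0 1 'X, 1%N)
  | (true, true) => (mx2 'X 'X 0 (-1), 1%N)
  end.

Lemma rho_letter_inv (x : letter) :
  (rho_letter x).1 *m (rho_letter (linv x)).1
  = ('X ^+ ((rho_letter x).2 + (rho_letter (linv x)).2))%:M.
Proof.
case: x => [[] []] /=; apply/matrixP => i j;
rewrite !mxE !big_ord_recl big_ord0 !mxE /=;
case: i => [[|[|i]] Hi] //; case: j => [[|[|j]] Hj] //=;
rewrite ?expr1 ?expr0 /= ?mulr0 ?mul0r ?mulr1 ?mul1r ?addr0 ?add0r ?mulrN ?mulNr ?opprK //;
by rewrite ?mulr1n ?mulr0n ?mul1r ?mulr1 ?subrr ?addNr.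
Qed.

Definition rho (w : word) : 'M[{poly int}]_2 * nat :=
  foldr (fun x acc => ((rho_letter x).1 *m acc.1, ((rho_letter x).2 + acc.2)%N))
        (1%:M, 0%N) w.

(* The field E of real Puiseux series.  A series sum_q c_q t^q is encoded by  *)
(* its coefficient function c : rat -> R; it is a Puiseux series iff its       *)
(* support is contained in (1/n)Z and is bounded below, for some n >= 1.       *)
Definition series := rat -> Rdefinitions.R.

Definition is_puiseux (c : series) : Prop :=
  exists (n : nat) (m : rat), (0 < n)%N /\
    forall q : rat, c q <> 0 -> m <= q /\ denq (q *+ n) = 1.

Definition Eadd (c e : series) : series := fun q => c q + e q.

(* Cauchy product (the sum is finite for Puiseux series) *)
Definition Emul (c e : series) : series :=
  fun q => (\sum_(r \in [set: rat]) (c r * e (q - r)))%R.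

Definition Epos (c : series) : Prop :=
  exists q0 : rat, 0 < c q0 /\ forall q, q < q0 -> c q = 0.
Definition Eneg (c : series) : Prop := Epos (fun q => - c q).

(* embedding Z[t^{+-1}] -> E : t^{-s} p  |->  its coefficient function *)
Definition laurE (p : {poly int}) (s : nat) : series :=
  fun q => if denq q == 1 then
             (if (0 <= numq q + s%:Z)%R then ((p`_(absz (numq q + s%:Z)))%:~R : Rdefinitions.R) else 0)
           else 0.

Definition rho_tr (w : word) : series := laurE (\tr (rho w).1) (rho w).2.
Definition rho_det (w : word) : series := laurE (\det (rho w).1) (2 * (rho w).2)%N.

Definition altsum (a : seq nat) : int :=
  match a with
  | [::] => 0
  | x :: r => x%:Z - (\sum_(y <- r) y)%N%:Z
  end.

Definition oddz (z : int) : bool := odd (absz z).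

(* Main.v *)
Require Import Defs.
From HB Require Import structures.
From mathcomp Require Import all_boot all_order all_algebra.
From mathcomp Require Import boolp classical_sets functions cardinality fsbigop.
From mathcomp Require Import Rstruct.
From mathcomp Require Import ring lra zify.
Import Order.TTheory GRing.Theory Num.Theory.
Local Open Scope ring_scope.
Set Implicit Arguments.
Unset Strict Implicit.
Unset Printing Implicit Defensive.
Definition RR := Rdefinitions.R.
Definition embed (m : int) (f : nat -> RR) : series :=
  fun q => if denq q == 1 then
             (if (0 <= numq q - m)%R then f (absz (numq q - m)) else 0) else 0.

Lemma embed_int m f (z : int) : embed m f (z%:~R) = if (0 <= z - m) then f (absz (z - m)) else 0.
Proof. by rewrite /embed numq_int denq_int eqxx. Qed.

Lemma rat_intP (q : rat) : denq q == 1 -> q = (numq q)%:~R.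
Proof. by move=> h; rewrite numqK //. Qed.

Definition cauchy (f g : nat -> RR) (n : nat) : RR := \sum_(i < n.+1) f i * g (n - i)%N.

Lemma embed_nz m f q : embed m f q != 0 ->
  exists i : nat, q = (m + i%:Z)%:~R /\ embed m f q = f i.
Proof.
rewrite /embed; case: ifP => [hq|]; last by rewrite eqxx.
case: ifP => [h0 _|]; last by rewrite eqxx.
exists (absz (numq q - m)); rewrite gez0_abs // (_ : m + _ = numq q); last by ring. split => //.
exact: rat_intP.
Qed.

Lemma Emul_embed m m' f g :
  Emul (embed m f) (embed m' g) = embed (m + m') (cauchy f g).
Proof.
apply/funext => q; rewrite /Emul.
case: (boolP (q \is a Num.int)) => hq; last first.
  have -> : embed (m + m') (cauchy f g) q = 0 by rewrite /embed -Qint_def (negbTE hq).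
  rewrite fsbig1 // => r _.
  apply/eqP; apply: contraR hq; rewrite mulf_eq0 negb_or => /andP[h1 h2].
  have [i [ri _]] := embed_nz h1.
  have [j [hj _]] := embed_nz h2.
  by rewrite -(subrK r q) hj ri rpredD // rpred_int.
move/numqK: (hq) => qE; rewrite -qE embed_int.
set N := numq q.
case: ifP => hN; last first.
  rewrite fsbig1 // => r _; apply/eqP; apply: contraFT hN.
  rewrite mulf_eq0 negb_or => /andP[h1 h2].
  have [i [ri _]] := embed_nz h1.
  have [j [hj _]] := embed_nz h2.
  move: hj; rewrite ri. rewrite -rmorphB => /(congr1 (@numq)); rewrite !numq_int => hh.
  lia.
have [n nE] : exists n : nat, (N - (m + m') = Posz n)%R.
  by exists (absz (N - (m + m'))%R); rewrite gez0_abs //; lia.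
rewrite nE /= /cauchy.
pose r := [seq ((m + i%:Z)%:~R : rat) | i <- iota 0 n.+1].
have ur : uniq r.
  rewrite map_inj_uniq ?iota_uniq // => i j /(congr1 (@numq)).
  by rewrite !numq_int => /addrI [].
rewrite -(fsbig_widen [set` r] setT) //; last first.
  move=> x [_ /= /negP xr]; apply/eqP; apply: contraR xr.
  rewrite mulf_eq0 negb_or => /andP[h1 h2].
  have [i [xi _]] := embed_nz h1.
  have [j [hj _]] := embed_nz h2.
  move: hj; rewrite xi -rmorphB => /(congr1 (@numq)); rewrite !numq_int => hj.
  apply/mapP; exists i => //; rewrite mem_iota /=; lia.
rewrite -fsbig_seq // big_map -(subn0 n.+1) -/(index_iota 0 n.+1) big_mkord.
apply: eq_bigr => i _.
rewrite embed_int -rmorphB !embed_int.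
have -> : m + (nat_of_ord i)%:Z - m = (nat_of_ord i)%:Z by ring.
have hi : (i <= n)%N by rewrite -ltnS.
have -> : N - (m + (nat_of_ord i)%:Z) - m' = (n - i)%N%:Z.
  by rewrite -subzn //; lia.
by [].
Qed.
Lemma puiseux_embed m f : is_puiseux (embed m f).
Proof.
exists 1%N, (m%:~R); split => // q; rewrite /embed.
case: ifP => [/eqP hq|]; last by move=> _ h; case: h.
case: ifP => [h0 _|]; last by move=> _ h; case: h.
rewrite mulr1n hq; split => //.
have qE : q = (numq q)%:~R by apply: rat_intP; rewrite hq.
by rewrite qE ler_int; lia.
Qed.

Lemma Epos_embed m f : 0 < f 0%N -> Epos (embed m f).
Proof.
move=> hf; exists (m%:~R); split; first by rewrite embed_int subrr lexx.
move=> q hq; rewrite /embed; case: ifP => // /rat_intP qE.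
rewrite ifN //; move: hq; rewrite {1}qE ltr_int; lia.
Qed.

Lemma Eneg_embed m f : f 0%N < 0 -> Eneg (embed m f).
Proof.
move=> hf; rewrite /Eneg.
have -> : (fun q => - embed m f q) = embed m (fun n => - f n).
  by apply/funext => q; rewrite /embed; do 2?case: ifP => _; rewrite ?oppr0.
by apply: Epos_embed; rewrite oppr_gt0.
Qed.

Section Rec.
Variables (tau : nat -> RR) (eps : RR) (p : nat).
Hypothesis p_gt0 : (0 < p)%N.
Hypothesis tau0 : tau 0%N != 0.

Definition step_f (f : nat -> RR) (r : nat) : RR :=
  (tau 0%N)^-1 * ((if r == 0%N then eps else 0) - \sum_(i < r) tau i.+1 * f (r - i.+1)%N
    + \sum_(i < r.+1) (if (p <= i)%N then f (i - p)%N * f (r - i)%N else 0)).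

Fixpoint mus (n : nat) : seq RR :=
  match n with
  | 0%N => [:: step_f (fun _ => 0) 0%N]
  | n'.+1 => rcons (mus n') (step_f (nth 0 (mus n')) n'.+1)
  end.

Definition mu (n : nat) : RR := nth 0 (mus n) n.

Lemma size_mus n : size (mus n) = n.+1.
Proof. by elim: n => //= n IH; rewrite size_rcons IH. Qed.

Lemma nth_mus n j : (j <= n)%N -> nth 0 (mus n) j = mu j.
Proof.
elim: n j => [|n IH] j hj; first by case: j hj.
case: (ltngtP j n.+1) => hjn; last by rewrite hjn.
- by rewrite /= nth_rcons size_mus hjn IH.
- lia.
Qed.

Lemma step_dep f g r : (forall j, (j < r)%N -> f j = g j) -> step_f f r = step_f g r.
Proof.
move=> hfg; rewrite /step_f; congr (_ * (_ - _ + _)).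
  apply: eq_bigr => i _; rewrite hfg //; case: r hfg i => [|r] hfg [i hi] //=; lia.
apply: eq_bigr => [[i hi]] _ /=; case: ifP => // hpi.
rewrite !hfg //; lia.
Qed.

Lemma mu_rec r : mu r = step_f mu r.
Proof.
case: r => [|n]; first by rewrite /mu /=; apply: step_dep.
rewrite /mu /= nth_rcons size_mus ltnn eqxx.
by apply: step_dep => j hj; rewrite nth_mus.
Qed.

Definition nu (n : nat) : RR := tau n - (if (p <= n)%N then mu (n - p)%N else 0).

Lemma nu0 : nu 0%N = tau 0%N.
Proof. by rewrite /nu leqn0 (negbTE (lt0n_neq0 p_gt0)) subr0. Qed.

Lemma cauchy_nu_mu r : cauchy nu mu r = if r == 0%N then eps else 0.
Proof.
rewrite /cauchy big_ord_recl mu_rec /step_f big_ord_recl /=.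
rewrite nu0.
rewrite leqn0 (negbTE (lt0n_neq0 p_gt0)) subn0 add0r.
set E := (if r == 0%N then eps else 0).
set A := \sum_(i < r) tau i.+1 * mu (r - i.+1)%N.
set B := \sum_(i < r) _.
have -> : \sum_(i < r) nu (bump 0 i) * mu (r - bump 0 i)%N = A - B.
  rewrite /A /B -sumrB; apply: eq_bigr => i _; rewrite /nu /bump /=.
  by case: ifP => _; ring.
rewrite mulrA mulfV //; ring.
Qed.

Lemma mu0 : mu 0%N = (tau 0%N)^-1 * eps.
Proof.
rewrite mu_rec /step_f big_ord0 big_ord1 leqn0 (negbTE (lt0n_neq0 p_gt0)) /=.
by rewrite subr0 addr0.
Qed.


Lemma Eadd_embed m : Eadd (embed m nu) (embed (m + p%:Z) mu) = embed m tau.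
Proof.
apply/funext => q; rewrite /Eadd /embed; case: ifP => _; last by rewrite addr0.
set z := numq q.
case: (ltP (z - m) 0) => hz.
  by rewrite ifN ?addr0 //; lia.
have [n hn] : exists n : nat, (z - m = Posz n)%R by exists (absz (z - m)%R); rewrite gez0_abs.
have -> : z - (m + p%:Z) = n%:Z - p%:Z by lia.
rewrite hn /= /nu.
case: (leqP p n) => hpn.
  by rewrite subzn // lez_nat /=; ring.
by rewrite ifN ?addr0 ?subr0 //; lia.
Qed.

End Rec.
Definition PI := {poly int}.

Lemma mx2_mul (a b c d a' b' c' d' : PI) :
  mx2 a b c d *m mx2 a' b' c' d' =
  mx2 (a*a'+b*c') (a*b'+b*d') (c*a'+d*c') (c*b'+d*d').
Proof.
apply/matrixP => i j; rewrite !mxE !big_ord_recl big_ord0 !mxE /=.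
by case: i => [[|[|i]] Hi] //; case: j => [[|[|j]] Hj] //=; rewrite addr0.
Qed.

Lemma mx2_scalar (a : PI) : a%:M = mx2 a 0 0 a.
Proof.
apply/matrixP => i j; rewrite !mxE.
by case: i => [[|[|i]] Hi] //; case: j => [[|[|j]] Hj] //=.
Qed.

Lemma det_mx2 (a b c d : PI) : \det (mx2 a b c d) = a * d - b * c.
Proof.
rewrite (expand_det_row _ ord0) !big_ord_recl big_ord0 /cofactor !det_mx11 !mxE /=.
rewrite addr0 /= expr0 expr1 mul1r; ring.
Qed.

Lemma rho_cat u v : rho (u ++ v) = ((rho u).1 *m (rho v).1, ((rho u).2 + (rho v).2)%N).
Proof.
elim: u => [|x u IH] /=; first by case: (rho v) => M s; rewrite mul1mx.
by rewrite IH /= mulmxA addnA.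
Qed.

Definition brel (A B : 'M[PI]_2 * nat) : Prop := 'X^(B.2) *: A.1 = 'X^(A.2) *: B.1.

Lemma scaleX_inj k (A B : 'M[PI]_2) : 'X^k *: A = 'X^k *: B -> A = B.
Proof.
move=> h; apply/eqP; rewrite -subr_eq0; apply/eqP.
have : 'X^k *: (A - B) = 0 by rewrite scalerBr h subrr.
by move/eqP; rewrite scalemx_eq0 (negbTE (monic_neq0 (monicXn _ _))) /= => /eqP.
Qed.

Lemma braid_brel u v : braid_eq u v -> brel (rho u) (rho v).
Proof.
elim => {u v}.
- by move=> w; rewrite /brel.
- by move=> u v _ h; rewrite /brel h.
- move=> u v w _ h1 _ h2; rewrite /brel in h1 h2 *.
  apply: (@scaleX_inj (rho v).2).
  by rewrite !scalerA -!exprD addnC exprD -scalerA h1 scalerA -exprD addnC exprD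
     -scalerA h2 !scalerA -!exprD addnC.
- move=> u u' v v' _ h1 _ h2; rewrite /brel !rho_cat /= in h1 h2 *.
  move: (rho u) (rho v) (rho u') (rho v') h1 h2 => [A1 a1] [A2 a2] [B1 b1] [B2 b2] /= h1 h2.
  have e1 : 'X^(b1 + b2) *: (A1 *m A2) = 'X^a2 *: ((('X^b1) *: A1) *m B2).
    by rewrite exprD -scalerA scalemxAr h2 -scalemxAr scalerA mulrC -scalerA -scalemxAl.
  by rewrite e1 h1 scalemxAl scalerA -exprD addnC scalemxAl.
- move=> x; rewrite /brel /= mulmx1 rho_letter_inv /= addn0 expr0 scale1r.
  by rewrite scalemx1.
- rewrite /brel /= !mulmx1 !mx2_mul; congr (_ *: mx2 _ _ _ _); ring.
Qed.

Lemma linvK x : linv (linv x) = x.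
Proof. by case: x => a b; rewrite /linv /= negbK. Qed.

Lemma winvK g : winv (winv g) = g.
Proof.
rewrite /winv map_rev revK -map_comp.
by elim: g => //= x g ->; rewrite linvK.
Qed.

Lemma winv_cons x g : winv (x :: g) = winv g ++ [:: linv x].
Proof. by rewrite /winv /= rev_cons cats1. Qed.

Lemma braid_inv g : braid_eq (g ++ winv g) [::].
Proof.
elim: g => [|x g IH]; first exact: beq_refl.
rewrite winv_cons catA.
apply: (@beq_trans _ ([:: x] ++ ([::] ++ [:: linv x]))); last exact: beq_cancel.
change (braid_eq ([:: x] ++ ((g ++ winv g) ++ [:: linv x])) ([:: x] ++ ([::] ++ [:: linv x]))).
apply: beq_cat; [exact: beq_refl | exact: beq_cat IH (beq_refl _)].
Qed.

Lemma braid_inv' g : braid_eq (winv g ++ g) [::].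
Proof. by have := braid_inv (winv g); rewrite winvK. Qed.

Lemma rho_inv g : (rho g).1 *m (rho (winv g)).1 = ('X^((rho g).2 + (rho (winv g)).2))%:M.
Proof.
have := braid_brel (braid_inv g); rewrite /brel rho_cat /= expr0 scale1r => ->.
by rewrite scalemx1.
Qed.

Lemma rho_inv' g : (rho (winv g)).1 *m (rho g).1 = ('X^((rho (winv g)).2 + (rho g).2))%:M.
Proof. by have := rho_inv (winv g); rewrite winvK. Qed.
Definition pe (p : PI) : nat -> RR := fun n => ((p`_n)%:~R : RR).

Lemma laurE_embed p s : laurE p s = embed (- s%:Z) (pe p).
Proof. by apply/funext => q; rewrite /laurE /embed opprK. Qed.

Lemma embed_shift m k p : embed m (pe ('X^k * p)) = embed (m + k%:Z) (pe p).
Proof.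
apply/funext => q; rewrite /embed; case: ifP => // _.
set z := numq q.
case: (ltP (z - m) 0) => hz.
  have h2 : (0 <= z - (m + k%:Z)) = false by lia.
  by rewrite h2.
have [n hn] : exists n : nat, (z - m = Posz n)%R by exists (absz (z - m)%R); rewrite gez0_abs.
have -> : z - (m + k%:Z) = n%:Z - k%:Z by lia.
rewrite hn /= /pe coefXnM.
case: (ltnP n k) => hnk.
  by rewrite ifN //; lia.
by rewrite subzn // lez_nat.
Qed.

Lemma embed_eqm m m' f : m = m' -> embed m f = embed m' f.
Proof. by move=> ->. Qed.

Lemma brel_tr A B : brel A B ->
  embed (- (A.2)%:Z) (pe (\tr A.1)) = embed (- (B.2)%:Z) (pe (\tr B.1)).
Proof.
move: A B => [A a] [B b]; rewrite /brel /= => h.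
have := congr1 (fun M => embed (- a%:Z - b%:Z) (pe (\tr M))) h.
rewrite /= !mxtraceZ !embed_shift => e.
rewrite (embed_eqm _ (_ : - a%:Z = - a%:Z - b%:Z + b%:Z)); last by ring.
by rewrite e; apply: embed_eqm; ring.
Qed.

Lemma brel_det A B : brel A B ->
  embed (- ((2 * A.2)%N)%:Z) (pe (\det A.1)) = embed (- ((2 * B.2)%N)%:Z) (pe (\det B.1)).
Proof.
move: A B => [A a] [B b]; rewrite /brel /= => h.
have := congr1 (fun M => embed (- (2 * a)%N%:Z - (2 * b)%N%:Z) (pe (\det M))) h.
rewrite /= !detZ -!exprM !embed_shift => e.
rewrite (embed_eqm _ (_ : - (2 * a)%N%:Z = - (2 * a)%N%:Z - (2 * b)%N%:Z + (b * 2)%N%:Z)); last by lia.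
by rewrite e; apply: embed_eqm; lia.
Qed.

Lemma rho_tr_embed w : rho_tr w = embed (- ((rho w).2)%:Z) (pe (\tr (rho w).1)).
Proof. exact: laurE_embed. Qed.

Lemma rho_det_embed w : rho_det w = embed (- ((2 * (rho w).2)%N)%:Z) (pe (\det (rho w).1)).
Proof. exact: laurE_embed. Qed.

Lemma conj_tr_det beta w : conjugate_B3 beta w ->
  rho_tr beta = rho_tr w /\ rho_det beta = rho_det w.
Proof.
case=> g hb; have hr := braid_brel hb.
rewrite !rho_tr_embed !rho_det_embed (brel_tr hr) (brel_det hr) !rho_cat /=.
have hi := rho_inv' g.
move: hi; set Mg := (rho g).1; set Mh := (rho (winv g)).1; set Mw := (rho w).1.
set sg := (rho g).2; set sh := (rho (winv g)).2; set sw := (rho w).2 => hi.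
split.
  rewrite mxtrace_mulC -mulmxA hi mul_mx_scalar mxtraceZ embed_shift.
  by apply: embed_eqm; lia.
have -> : \det (Mg *m (Mw *m Mh)) = 'X^((sh + sg) * 2) * \det Mw.
  rewrite !det_mulmx exprM -det_scalar -hi det_mulmx; ring.
by rewrite embed_shift; apply: embed_eqm; lia.
Qed.
Definition block (a : nat) : word := nseq a (linv sig2) ++ [:: sig1].

Definition mxg {R : Type} (a b c d : R) : 'M[R]_2 :=
  \matrix_(i < 2, j < 2)
    if i == ord0 then (if j == ord0 then a else b) else (if j == ord0 then c else d).

Lemma mxg_mul (R : comRingType) (a b c d a' b' c' d' : R) :
  mxg a b c d *m mxg a' b' c' d' =
  mxg (a*a'+b*c') (a*b'+b*d') (c*a'+d*c') (c*b'+d*d').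
Proof.
apply/matrixP => i j; rewrite !mxE !big_ord_recl big_ord0 !mxE /=.
by case: i => [[|[|i]] Hi] //; case: j => [[|[|j]] Hj] //=; rewrite addr0.
Qed.

Definition ev0 (M : 'M[PI]_2) : 'M[int]_2 := map_mx (horner_eval (0 : int)) M.

Lemma ev0_mul A B : ev0 (A *m B) = ev0 A *m ev0 B.
Proof. exact: map_mxM. Qed.

Lemma ev0_mx2 (a b c d : PI) : ev0 (mx2 a b c d) = mxg a.[0] b.[0] c.[0] d.[0].
Proof.
apply/matrixP => i j; rewrite !mxE.
by case: i => [[|[|i]] Hi] //; case: j => [[|[|j]] Hj] //=.
Qed.

Lemma block_rho a : [/\ (rho (block a)).2 = a,
  ev0 (rho (block a)).1 = mxg 0 0 ((-1)^+a) ((-1)^+a) &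
  \det (rho (block a)).1 = (-'X)^+a.+1].
Proof.
elim: a => [|a [IH1 IH2 IH3]].
  rewrite /block /= mulmx1 ev0_mx2 det_mx2 !hornerE expr1 expr0; split => //.
  by rewrite subr0.
have -> : rho (block a.+1) =
  ((mx2 'X 'X 0 (-1)) *m (rho (block a)).1, (1 + (rho (block a)).2)%N) by [].
rewrite /= IH1 ev0_mul ev0_mx2 IH2 det_mulmx IH3 det_mx2 mxg_mul !hornerE; split => //.
  by rewrite !exprS; congr mxg; ring.
by rewrite [in RHS]exprS; ring.
Qed.

Lemma pref_rho x b :
  let R := rho (flatten (map block (x :: b))) in
  [/\ R.2 = sumn (x :: b),
      ev0 R.1 = mxg 0 0 ((-1)^+ sumn (x :: b)) ((-1)^+ sumn (x :: b)) &
      \det R.1 = (-'X)^+(sumn (x :: b) + size (x :: b))].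
Proof.
elim: b x => [|y b IH] x.
  have [h1 h2 h3] := block_rho x.
  by rewrite /= cats0 h1 h2 h3 addn0 addn1.
have [h1 h2 h3] := block_rho x.
have [i1 i2 i3] := IH y.
rewrite /= rho_cat /=; rewrite /= in i1 i2 i3.
rewrite h1 i1 ev0_mul h2 i2 det_mulmx h3 i3 mxg_mul; split => //.
  by rewrite !mul0r !mulr0 !add0r -exprD.
rewrite -exprD; congr (GRing.exp _ _); lia.
Qed.

Lemma rho_Delta : rho Delta = (('X^3)%:M, 0%N).
Proof.
rewrite /rho /= !mulmx1 !mx2_mul mx2_scalar; congr (mx2 _ _ _ _, _); ring.
Qed.

Lemma rho_Deltainv : rho (winv Delta) = (('X^3)%:M, 6%N).
Proof.
have -> : winv Delta = [:: (false, true); (true, true); (false, true);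
  (false, true); (true, true); (false, true)] by [].
rewrite /rho /= !mulmx1 !mx2_mul mx2_scalar; congr (mx2 _ _ _ _, _); ring.
Qed.

Lemma rho_pow w c s n : rho w = (c%:M, s) ->
  rho (flatten (nseq n w)) = ((c ^+ n)%:M, (n * s)%N).
Proof.
move=> h; elim: n => [|n IH]; first by rewrite expr0.
have -> : flatten (nseq n.+1 w) = w ++ flatten (nseq n w) by [].
by rewrite rho_cat h IH /= -scalar_mxM exprS mulSn.
Qed.

Lemma rho_wpowD d : exists j s : nat,
  rho (wpow Delta (2 * d)) = (('X^j)%:M, s) /\ (j%:Z - s%:Z = 6 * d)%R.
Proof.
have h6 : (6 * d = 3 * (2 * d))%R by ring.
rewrite h6; case: (2 * d) => [n|n].
  exists (3 * n)%N, 0%N; rewrite (rho_pow _ rho_Delta) -exprM muln0; split => //.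
  by rewrite subr0 PoszM.
have -> : wpow Delta (Negz n) = flatten (nseq n.+1 (winv Delta)) by [].
exists (3 * n.+1)%N, (n.+1 * 6)%N; rewrite (rho_pow _ rho_Deltainv) -exprM; split => //.
rewrite NegzE !PoszM; ring.
Qed.
Lemma odd_absz_sub (x y : nat) : odd (absz (x%:Z - y%:Z)) = odd (x + y).
Proof.
case: (leqP y x) => h.
  by rewrite subzn // oddB // oddD.
have hyx : (x <= y)%N by rewrite ltnW.
have -> : x%:Z - y%:Z = - (y - x)%N%:Z by rewrite -subzn // opprB.
by rewrite abszN /= oddB // oddD addbC.
Qed.

Lemma sgn_pos n : ~~ odd n -> 0 < (-1)^+n :> RR.
Proof. by move=> h; rewrite -signr_odd (negbTE h) expr0 ltr01. Qed.

Lemma sgn_neg n : odd n -> (-1)^+n < 0 :> RR.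
Proof. by move=> h; rewrite -signr_odd h expr1 ltrN10. Qed.

Lemma tr_ev0 M : horner_eval (0 : int) (\tr M) = \tr (ev0 M).
Proof. by rewrite /mxtrace rmorph_sum; apply: eq_bigr => i _; rewrite mxE. Qed.

Lemma tr_mxg (c : int) : \tr (mxg 0 0 c c) = c.
Proof. by rewrite /mxtrace !big_ord_recl big_ord0 !mxE /= add0r addr0. Qed.

Lemma pe_C (c : int) : pe c%:P = fun n => if n == 0%N then (c%:~R : RR) else 0.
Proof. by apply/funext => n; rewrite /pe coefC; case: (n == 0%N). Qed.

Lemma pref_rho' x b :
  [/\ (rho (flatten (map block (x :: b)))).2 = sumn (x :: b),
      ev0 (rho (flatten (map block (x :: b)))).1 = mxg 0 0 ((-1)^+ sumn (x :: b)) ((-1)^+ sumn (x :: b)) &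
      \det (rho (flatten (map block (x :: b)))).1 = (-'X)^+(sumn (x :: b) + size (x :: b))].
Proof. exact: pref_rho x b. Qed.

Lemma oddz_altsum a : oddz (altsum a) = odd (sumn a).
Proof. by case: a => [|a0 a'] //=; rewrite /oddz -sumnE odd_absz_sub. Qed.
Theorem mainTheorem13 (a : seq nat) (d : int) (beta : word) :
  (0 < size a)%N ->
  has (fun ai => ai != 0%N) a ->
  conjugate_B3 beta (model_word a d) ->
  exists l1 l2 : series,
    [/\ is_puiseux l1, is_puiseux l2,
        Eadd l1 l2 = rho_tr beta & Emul l1 l2 = rho_det beta] /\
    (~~ odd (size a) && ~~ odd (\sum_(ai <- a) ai)%N -> Epos l1 /\ Epos l2) /\
    (odd (size a) && oddz (altsum a) -> Eneg l1 /\ Eneg l2) /\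
    (oddz ((size a)%:Z - (\sum_(ai <- a) ai)%N%:Z) ->
       (Epos l1 /\ Eneg l2) \/ (Eneg l1 /\ Epos l2)).
Proof.
move=> ha _ hc.
have [htr hdet] := conj_tr_det hc.
rewrite htr hdet -!sumnE.
case ea: (rev a) => [|x b]; first by move: ha; rewrite -size_rev ea.
have hS : sumn a = sumn (x :: b) by rewrite -sumn_rev ea.
have hk : size a = size (x :: b) by rewrite -size_rev ea.
have -> : model_word a d = flatten (map block (x :: b)) ++ wpow Delta (2 * d)
  by rewrite /model_word ea.
have [j [s [hD hjs]]] := rho_wpowD d.
have [p1 p2 p3] := pref_rho' x b.
rewrite -hS -hk in p1 p2 p3.
set S := sumn a in p1 p2 p3 hS *.
set k := size a in p1 p2 p3 hk ha *.
set Mp := (rho (flatten (map block (x :: b)))).1 in p2 p3 *.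
set tau := pe (\tr Mp).
set eps : RR := (-1)^+(S + k).
set p := (S + k)%N.
have p_gt0 : (0 < p)%N by rewrite /p; lia.
have tau0 : tau 0%N = (-1)^+S.
  rewrite /tau /pe -horner_coef0 -[_.[0]]/(horner_eval 0 _) tr_ev0 p2 tr_mxg.
  by rewrite rmorphXn rmorphN1.
have tau0nz : tau 0%N != 0 by rewrite tau0 signr_eq0.
set m : int := j%:Z - (S + s)%:Z.
exists (embed m (nu tau eps p)), (embed (m + p%:Z) (mu tau eps p)).
have nu0' : nu tau eps p 0%N = (-1)^+S by rewrite nu0.
have mu0' : mu tau eps p 0%N = (-1)^+k.
  by rewrite mu0 // tau0 /eps exprD mulrA mulVf ?signr_eq0 // mul1r.
split; [split|].
- exact: puiseux_embed.
- exact: puiseux_embed.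
- rewrite Eadd_embed // rho_tr_embed rho_cat /= hD /= p1 mul_mx_scalar mxtraceZ embed_shift.
  by apply: embed_eqm; rewrite /m; lia.
- rewrite Emul_embed.
  have -> : cauchy (nu tau eps p) (mu tau eps p) = fun r => if r == 0%N then eps else 0.
    by apply/funext => r; rewrite cauchy_nu_mu.
  rewrite rho_det_embed rho_cat /= hD /= p1 det_mulmx p3 det_scalar.
  have -> : (- 'X) ^+ p * ('X^j) ^+ 2 = 'X^(p + j * 2) * (((-1) ^+ p : int)%:P).
    by rewrite rmorphXn rmorphN1 [(- 'X) ^+ p]exprNn exprD exprM; ring.
  rewrite embed_shift pe_C.
  have -> : (((-1) ^+ p : int)%:~R : RR) = eps by rewrite rmorphXn rmorphN1.
  by apply: embed_eqm; rewrite /m; lia.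
split; [|split].
- case/andP => hk1 hS1; split.
    by apply: Epos_embed; rewrite nu0'; apply: sgn_pos.
  by apply: Epos_embed; rewrite mu0'; apply: sgn_pos.
- case/andP => hk1 hS1.
  have oS : odd S by rewrite /S -oddz_altsum.
  split.
    by apply: Eneg_embed; rewrite nu0'; apply: sgn_neg.
  by apply: Eneg_embed; rewrite mu0'; apply: sgn_neg.
- rewrite /oddz odd_absz_sub oddD => hkS.
  case oS: (odd S).
    right; split.
      by apply: Eneg_embed; rewrite nu0'; apply: sgn_neg.
    by apply: Epos_embed; rewrite mu0'; apply: sgn_pos; rewrite oS in hkS; case: (odd k) hkS.
  left; split.
    by apply: Epos_embed; rewrite nu0'; apply: sgn_pos; rewrite oS.
  by apply: Eneg_embed; rewrite mu0'; apply: sgn_neg; rewrite oS in hkS; case: (odd k) hkS.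
Qed.
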